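(* Let $\mathcal{X}$ be an infinite domain and $l\ge1$ an integer. Then for every integer $m\ge0$ there exists an $(l-1,m)$-difficult extended mistake tree with respect to $\mathcal{C}^l$ all of whose dashed edges are labeled $+1$ (i.e. go to the right child).
   Context: $\mathcal{C}^l$ is the class of functions $\mathcal{X}\to\{-1,+1\}$ of the form $x\mapsto1-2I(x\in D)$ with $D\subseteq\mathcal{X}$, $|D|\le l$. Extended mistake tree w.r.t. a class $\mathcal{H}$: a finite full binary tree (possibly a single leaf) in which each internal node $v$ is labeled by $x_v\in\mathcal{X}$ and has two solid downward edges, to its left child (label $-1$) and right child (label $+1$), plus one dashed downward edge to one of its two children, whose label is the label of that child's direction; each leaf is labeled by some $h\in\mathcal{H}$ with $h(x_v)$ equal to the direction label at every internal node $v$ on the root-to-leaf path. A root-to-leaf path chooses at each internal node one downward edge; its length is its number of edges. The tree is $(k,m)$-difficult if every root-to-leaf path using at most $k$ solid edges has length at least $m$. *)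

(* Defs.v *)
From Stdlib Require Import ZArith List Arith.
Import ListNotations.

Definition infinite_type (X : Type) : Prop :=
  forall s : list X, exists x : X, ~ In x s.

(* A subset D with |D| <= l is represented by a list of length <= l
   (its set of elements). h x = -1 if x \in D and h x = +1 otherwise. *)
Definition Cl (X : Type) (l : nat) (h : X -> Z) : Prop :=
  exists D : list X, (length D <= l)%nat /\
    forall x, (In x D /\ h x = (-1)%Z) \/ (~ In x D /\ h x = 1%Z).

(* Node x d L R : internal node labeled x, left child L (label -1),
   right child R (label +1); the dashed edge goes to the right child
   iff d = true (label +1), to the left child iff d = false (label -1). *)
Inductive emtree (X : Type) : Type :=
| Leaf : (X -> Z) -> emtree X
| Node : X -> bool -> emtree X -> emtree X -> emtree X.
Arguments Leaf {X} _.
Arguments Node {X} _ _ _ _.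

Fixpoint emt_valid_aux {X : Type} (H : (X -> Z) -> Prop)
    (acc : list (X * Z)) (t : emtree X) : Prop :=
  match t with
  | Leaf h => H h /\ Forall (fun p => h (fst p) = snd p) acc
  | Node x _ L R =>
      emt_valid_aux H ((x, (-1)%Z) :: acc) L /\
      emt_valid_aux H ((x, 1%Z) :: acc) R
  end.

Definition emt_valid {X : Type} (H : (X -> Z) -> Prop) (t : emtree X) : Prop :=
  emt_valid_aux H [] t.

Inductive emt_path {X : Type} : emtree X -> nat -> nat -> Prop :=
| path_leaf : forall h, emt_path (Leaf h) 0 0
| path_solid_left : forall x d L R s n,
    emt_path L s n -> emt_path (Node x d L R) (S s) (S n)
| path_solid_right : forall x d L R s n,
    emt_path R s n -> emt_path (Node x d L R) (S s) (S n)
| path_dashed : forall x (d : bool) L R s n,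
    emt_path (if d then R else L) s n -> emt_path (Node x d L R) s (S n).

Definition difficult {X : Type} (k m : nat) (t : emtree X) : Prop :=
  forall s n, emt_path t s n -> (s <= k)%nat -> (m <= n)%nat.

Fixpoint all_dashed_right {X : Type} (t : emtree X) : Prop :=
  match t with
  | Leaf _ => True
  | Node _ d L R => d = true /\ all_dashed_right L /\ all_dashed_right R
  end.

(* Main.v *)
Require Import Defs.
From Stdlib Require Import ZArith List Arith Lia ClassicalEpsilon.
Import ListNotations.

Definition Dof {X : Type} (acc : list (X * Z)) : list X :=
  map fst (filter (fun p => Z.eqb (snd p) (-1)) acc).

Definition hD {X : Type} (D : list X) : X -> Z :=
  fun y => if excluded_middle_informative (In y D) then (-1)%Z else 1%Z.

Lemma nodup_fst {X : Type} (acc : list (X * Z)) x a b :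
  NoDup (map fst acc) -> In (x, a) acc -> In (x, b) acc -> a = b.
Proof.
  induction acc as [|[y c] acc IH]; simpl; intros Hnd Ha Hb; [contradiction|].
  inversion Hnd; subst.
  destruct Ha as [Ha|Ha]; destruct Hb as [Hb|Hb].
  - inversion Ha; inversion Hb; subst; auto.
  - inversion Ha; subst. exfalso. apply H1. apply (in_map fst) in Hb. exact Hb.
  - inversion Hb; subst. exfalso. apply H1. apply (in_map fst) in Ha. exact Ha.
  - eauto.
Qed.

Lemma leaf_ok {X : Type} (l : nat) (acc : list (X * Z)) :
  NoDup (map fst acc) -> (forall p, In p acc -> snd p = (-1)%Z \/ snd p = 1%Z) ->
  length (Dof acc) <= l -> emt_valid_aux (Cl X l) acc (Leaf (hD (Dof acc))).
Proof.
  intros Hnd Hlab Hlen. simpl. split.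
  - exists (Dof acc). split; auto. intro x. unfold hD.
    destruct (excluded_middle_informative (In x (Dof acc))); auto.
  - apply Forall_forall. intros [x v] Hin. simpl. unfold hD.
    destruct (Hlab _ Hin) as [Hv|Hv]; simpl in Hv; subst v;
    destruct (excluded_middle_informative (In x (Dof acc))) as [Hi|Hi]; auto.
    + exfalso. apply Hi. unfold Dof. apply (in_map fst (filter _ acc) (x, (-1)%Z)).
      apply filter_In. split; auto.
    + unfold Dof in Hi. apply in_map_iff in Hi. destruct Hi as [[y w] [Hy Hw]].
      simpl in Hy; subst y. apply filter_In in Hw. destruct Hw as [Hw Heq].
      simpl in Heq. apply Z.eqb_eq in Heq. subst w.
      pose proof (nodup_fst acc x _ _ Hnd Hin Hw). discriminate.
Qed.

Lemma main_aux (X : Type) (Hinf : infinite_type X) (l : nat) :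
  forall n (acc : list (X * Z)), NoDup (map fst acc) ->
  (forall p, In p acc -> snd p = (-1)%Z \/ snd p = 1%Z) ->
  length (Dof acc) <= l ->
  exists t, emt_valid_aux (Cl X l) acc t /\ all_dashed_right t /\
    forall s len, emt_path t s len -> n <= len \/ l <= s + length (Dof acc).
Proof.
  induction n as [|n IH]; intros acc Hnd Hlab Hlen.
  - exists (Leaf (hD (Dof acc))). split; [apply leaf_ok; auto|].
    split; [exact I|]. intros; lia.
  - destruct (Nat.eq_dec (length (Dof acc)) l) as [Heq|Hne].
    + exists (Leaf (hD (Dof acc))). split; [apply leaf_ok; auto|].
      split; [exact I|]. intros; lia.
    + destruct (Hinf (map fst acc)) as [x Hx].
      destruct (IH ((x, (-1)%Z) :: acc)) as [L [HLv [HLd HLp]]].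
      { simpl. constructor; auto. }
      { simpl. intros p [<-|Hp]; auto. }
      { unfold Dof in *. simpl. lia. }
      destruct (IH ((x, 1%Z) :: acc)) as [R [HRv [HRd HRp]]].
      { simpl. constructor; auto. }
      { simpl. intros p [<-|Hp]; auto. }
      { unfold Dof in *. simpl. lia. }
      exists (Node x true L R). split; [simpl; auto|]. split; [simpl; auto|].
      assert (EL : length (Dof ((x, (-1)%Z) :: acc)) = S (length (Dof acc))) by
        (unfold Dof; simpl; reflexivity).
      assert (ER : length (Dof ((x, 1%Z) :: acc)) = length (Dof acc)) by
        (unfold Dof; simpl; reflexivity).
      intros s len Hp. inversion Hp; subst;
      match goal with
      | H : emt_path L _ _ |- _ => destruct (HLp _ _ H); lia
      | H : emt_path R _ _ |- _ => destruct (HRp _ _ H); lia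
      | H : emt_path (if true then R else L) _ _ |- _ => simpl in H; destruct (HRp _ _ H); lia
      end.
Qed.

Theorem mainTheorem19 :
  forall (X : Type), infinite_type X ->
  forall (l : nat), (1 <= l)%nat ->
  forall (m : nat),
    exists t : emtree X,
      emt_valid (Cl X l) t /\ difficult (l - 1) m t /\ all_dashed_right t.
Proof.
  intros X Hinf l Hl m.
  destruct (main_aux X Hinf l m []) as [t [Hv [Hd Hp]]].
  - constructor.
  - simpl; tauto.
  - simpl. unfold Dof. simpl. lia.
  - exists t. split; [exact Hv|]. split; [|exact Hd].
    intros s n Hpath Hs. destruct (Hp _ _ Hpath); auto.
    unfold Dof in H; simpl in H. lia.
Qed.
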